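(* Every multilinear quasi-identity of $M_n$ of degree $n$ in $x_1,\dots,x_n$ is a scalar multiple (by an element of $F$) of the Cayley–Hamilton polynomial $Q_n$.
   Context: $F$ is a field of characteristic $0$, $M_n=M_n(F)$, $\mathcal C=F[x^{(k)}_{ij}]$, quasi-polynomials are elements of the free $\mathcal C$-algebra on noncommuting $x_1,x_2,\dots$; a quasi-identity vanishes upon substituting any $A_k=(a^{(k)}_{ij})\in M_n$ for $x_k$ and $a^{(k)}_{ij}$ for $x^{(k)}_{ij}$. A quasi-polynomial $P(x_1,\dots,x_n)$ is multilinear of degree $n$ if it is a sum of terms $\lambda(x_{i_1},\dots,x_{i_k})x_{i_{k+1}}\cdots x_{i_n}$ where $\{1,\dots,n\}$ is the disjoint union of $\{i_1,\dots,i_k\}$ and $\{i_{k+1},\dots,i_n\}$ and $\lambda$ is an $F$-linear combination of products $x^{(i_1)}_{s_1t_1}\cdots x^{(i_k)}_{s_kt_k}$. With generic matrices $\xi_k=(x^{(k)}_{ij})$ and $\mathrm{tr}(x_{i_1}\cdots x_{i_r}):=\mathrm{tr}(\xi_{i_1}\cdots\xi_{i_r})$, $Q_n=\sum_{\sigma\in S_{n+1}}\epsilon_\sigma\phi_\sigma(x_1,\dots,x_n)$, where for $\sigma=(i_1,\dots,i_{k_1})\cdots(u_1,\dots,u_h)(s_1,\dots,s_k,n+1)$ (disjoint cycles, the one containing $n+1$ last) $\phi_\sigma=\mathrm{tr}(x_{i_1}\cdots x_{i_{k_1}})\cdots\mathrm{tr}(x_{u_1}\cdots x_{u_h})x_{s_1}\cdots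 x_{s_k}$. *)

(* Defs.v *)
From HB Require Import structures.
From mathcomp Require Import all_boot all_order all_algebra all_fingroup.
Set Implicit Arguments. Unset Strict Implicit. Unset Printing Implicit Defensive.
Import Order.TTheory GRing.Theory Num.Theory.
Local Open Scope ring_scope.

(* A multilinear quasi-monomial of degree n in x_1..x_n (indices 'I_n):
   a pair (e, w) where e k = Some (s, t) means the commutative factor
   x^{(k)}_{s t} occurs in the coefficient lambda, and w is the word
   (noncommutative monomial) x_{w_1} ... x_{w_r}. *)
Definition quasi_mono (n : nat) := ({ffun 'I_n -> option ('I_n * 'I_n)} * seq 'I_n)%type.

Definition ml_mono n (m : quasi_mono n) : bool :=
  uniq m.2 && [forall k, (k \in m.2) == (m.1 k == None)].

(* A quasi-polynomial in x_1..x_n (restricted to the relevant monomials) is a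
   formal finite F-linear combination of quasi-monomials. *)
Definition quasi_poly (F : fieldType) n := seq (F * quasi_mono n).

(* Coefficient of a monomial: formal equality of quasi-polynomials is
   equality of all coefficients. *)
Definition quasi_coef (F : fieldType) n (P : quasi_poly F n) (m : quasi_mono n) : F :=
  \sum_(t <- P | t.2 == m) t.1.

Definition quasi_multilinear (F : fieldType) n (P : quasi_poly F n) : bool :=
  all (fun t => ml_mono t.2) P.

(* Evaluation at matrices A k (x^{(k)}_{ij} |-> A k i j). *)
Definition quasi_mono_eval (F : fieldType) n (m : quasi_mono n) (A : 'I_n -> 'M[F]_n)
  : 'M[F]_n :=
  (\prod_(k : 'I_n) (if m.1 k is Some p then A k p.1 p.2 else 1))
    *: \prod_(k <- m.2) A k.

Definition quasi_eval (F : fieldType) n (P : quasi_poly F n) (A : 'I_n -> 'M[F]_n)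
  : 'M[F]_n :=
  \sum_(t <- P) t.1 *: quasi_mono_eval t.2 A.

Definition quasi_identity (F : fieldType) n (P : quasi_poly F n) : Prop :=
  forall A : 'I_n -> 'M[F]_n, quasi_eval P A = 0.

(* n+1 is represented by ord_max : 'I_n.+1, and k <= n by widen_ord. *)

(* Word of the cycle (s_1,...,s_k,n+1) of sigma containing n+1:
   [s_1; ...; s_k] with s_1 = sigma(n+1), s_{a+1} = sigma(s_a). *)
Definition cycle_word n (s : 'S_n.+1) : seq 'I_n :=
  pmap (fun x : 'I_n.+1 => (insub (val x) : option 'I_n)) (fingraph.orbit (fun x => s x) ord_max).

Definition perm_on_small n (s : 'S_n.+1) (i : 'I_n) : 'I_n :=
  insubd i (val (s (widen_ord (leqnSn n) i))).

(* Expanding tr(x_{i_1}...x_{i_r}) = sum_j x^{(i_1)}_{j_{i_1} j_{i_2}} ...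
   x^{(i_r)}_{j_{i_r} j_{i_1}}: for each row assignment j, the factor of
   variable i (outside the cycle of n+1) is x^{(i)}_{j(i), j(sigma i)}. *)
Definition phi_mono n (s : 'S_n.+1) (j : {ffun 'I_n -> 'I_n}) : quasi_mono n :=
  ([ffun i => if i \in cycle_word s then None
              else Some (j i, j (perm_on_small s i))], cycle_word s).

(* j is normalised (j i = i) on the indices of the word, where it is unused. *)
Definition phi_index_ok n (s : 'S_n.+1) (j : {ffun 'I_n -> 'I_n}) : bool :=
  [forall i, (i \in cycle_word s) ==> (j i == i)].

Definition phi (F : fieldType) n (s : 'S_n.+1) : quasi_poly F n :=
  [seq (1, phi_mono s j) | j <- [seq j <- enum {ffun 'I_n -> 'I_n} | phi_index_ok s j]].

Definition Qn (F : fieldType) n : quasi_poly F n :=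
  flatten [seq [seq ((-1) ^+ odd_perm s * t.1, t.2) | t <- phi F s]
          | s <- enum [set: 'S_n.+1]].

(* Main.v *)
Require Import Defs.
From HB Require Import structures.
From mathcomp Require Import all_boot all_order all_algebra all_fingroup.
From mathcomp Require Import zify.
Import Order.TTheory GRing.Theory Num.Theory.
Local Open Scope ring_scope.
Set Implicit Arguments. Unset Strict Implicit. Unset Printing Implicit Defensive.
Section Walks.
Variable n : nat.
Implicit Types (E : 'I_n -> 'I_n * 'I_n) (l w : seq 'I_n).

Fixpoint walkb E (a : 'I_n) l (b : 'I_n) : bool :=
  if l is c :: l' then ((E c).1 == a) && walkb E (E c).2 l' b else a == b.

Variable F : fieldType.

Lemma prod_delta E l a b :
  (\prod_(k <- l) (delta_mx (E k).1 (E k).2 : 'M[F]_n)) a b = (walkb E a l b)%:R.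
Proof.
elim: l a b => [|c l IH] a b /=.
  by rewrite big_nil mxE.
rewrite big_cons -mulmxE mxE.
rewrite (bigD1 (E c).2) //= [X in _ + X]big1 ?addr0; last first.
  by move=> x hx; rewrite mxE (negbTE hx) andbF mul0r.
by rewrite IH mxE eqxx andbT -natrM mulnb eq_sym.
Qed.

Lemma prod_forall (T : finType) (B : T -> bool) :
  \prod_(k : T) ((B k)%:R : F) = ([forall k, B k])%:R.
Proof.
case: forallP => [H|H].
  by rewrite big1 // => k _; rewrite H.
have [k Hk] : exists k, ~~ B k.
  by apply/existsP; rewrite -negb_forall; apply/forallP.
by rewrite (bigD1 k) //= (negbTE Hk) mul0r.
Qed.

Definition ind E a b (m : quasi_mono n) : bool :=
  [forall k, if m.1 k is Some p then p == E k else true] && walkb E a m.2 b.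

Lemma mono_eval_entry E a b (m : quasi_mono n) :
  (quasi_mono_eval m (fun k => (delta_mx (E k).1 (E k).2 : 'M[F]_n))) a b = (ind E a b m)%:R.
Proof.
rewrite /quasi_mono_eval mxE prod_delta /ind -mulnb natrM; congr (_ * _).
rewrite (eq_bigr (fun k => ((if m.1 k is Some p then p == E k else true) : bool)%:R)).
  exact: prod_forall.
move=> k _; case: (m.1 k) => [[p1 p2]|] //=; rewrite mxE.
by rewrite -pair_eqE.
Qed.
End Walks.
Section Eval.
Variable n : nat.
Variable F : fieldType.
Implicit Types (E : 'I_n -> 'I_n * 'I_n) (l w : seq 'I_n) (P : quasi_poly F n).

Lemma eval_entry P E a b :
  (quasi_eval P (fun k => (delta_mx (E k).1 (E k).2 : 'M[F]_n))) a b =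
  \sum_(t <- P) t.1 * (ind E a b t.2)%:R.
Proof.
rewrite /quasi_eval summxE; apply: eq_bigr => t _.
by rewrite mxE mono_eval_entry.
Qed.

Definition mk E l : quasi_mono n := ([ffun k => if k \in l then None else Some (E k)], l).

Lemma ind_mk E a b l : ind E a b (mk E l) = walkb E a l b.
Proof.
rewrite /ind /=.
have -> : [forall k, if [ffun k => if k \in l then None else Some (E k)] k is Some p
   then p == E k else true] by apply/forallP => k; rewrite ffunE; case: ifP.
done.
Qed.

Lemma ind_ml E a b (m : quasi_mono n) : ml_mono m -> ind E a b m ->
  [/\ m = mk E m.2, uniq m.2 & walkb E a m.2 b].
Proof.
case/andP=> Hu /forallP Hk /andP[/forallP Hf Hw]; split => //.
case: m Hk Hf Hw Hu => f w /= Hk Hf Hw Hu; congr (_, _); apply/ffunP => k.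
rewrite ffunE; have := Hk k; have := Hf k; case: (f k) => [p|] /=.
  by move=> /eqP -> /eqP ->.
by move=> _ /eqP ->.
Qed.

Lemma natr_mem_uniq (T : eqType) (x : T) (s : seq T) : uniq s ->
  ((x \in s)%:R : F) = \sum_(y <- s) (x == y)%:R.
Proof.
elim: s => [|y s IH]; first by rewrite big_nil.
rewrite big_cons /= inE => /andP[ys us]; rewrite -IH //.
case: eqP => [->|_] /=; last by rewrite add0r.
by rewrite (negbTE ys) addr0.
Qed.

Lemma coef_sum P E a b (ms : seq (quasi_mono n)) :
  quasi_multilinear P -> uniq ms ->
  (forall m', ml_mono m' -> ind E a b m' = (m' \in ms)) ->
  \sum_(t <- P) t.1 * (ind E a b t.2)%:R = \sum_(m <- ms) quasi_coef P m.
Proof.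
move=> /allP HP Hu Hind.
rewrite (eq_big_seq (fun t => \sum_(m <- ms) t.1 * (t.2 == m)%:R)); last first.
  move=> t /HP Ht; rewrite Hind // natr_mem_uniq // mulr_sumr //.
rewrite exchange_big /=; rewrite /quasi_coef.
apply: eq_bigr => m _; rewrite [RHS]big_mkcond /=; apply: eq_bigr => t _.
by rewrite mulr_natr mulrb.
Qed.
End Eval.
Section Trail.
Variable n : nat.
Implicit Types (E : 'I_n -> 'I_n * 'I_n) (l w vs : seq 'I_n).

Fixpoint trailE E (v : 'I_n) w vs : bool :=
  match w, vs with
  | [::], [::] => true
  | c :: w', v' :: vs' => (E c == (v, v')) && trailE E v' w' vs'
  | _, _ => false
  end.

Lemma trailE_walk E v w vs : trailE E v w vs -> walkb E v w (last v vs).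
Proof.
elim: w v vs => [|c w IH] v [|v' vs] //=.
by case/andP=> /eqP Ec /IH; rewrite Ec /= eqxx.
Qed.

Lemma trailE_src E v w vs c : trailE E v w vs -> c \in w -> (E c).1 \in belast v vs.
Proof.
elim: w v vs => [|c' w IH] v [|v' vs] //= /andP[/eqP Ec' Ht].
rewrite inE => /orP[/eqP ->|cw]; first by rewrite Ec' mem_head.
by rewrite inE (IH _ _ Ht cw) orbT.
Qed.

Lemma walkb_cat E a l1 l2 x b : walkb E a l1 x -> walkb E x l2 b -> walkb E a (l1 ++ l2) b.
Proof.
elim: l1 a => [|c l1 IH] a /=; first by move=> /eqP ->.
by case/andP=> -> /IH H /H ->.
Qed.

Lemma walkb_catE E a l1 l2 b : walkb E a (l1 ++ l2) b ->
  exists x, walkb E a l1 x /\ walkb E x l2 b.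
Proof.
elim: l1 a => [|c l1 IH] a /=; first by move=> H; exists a; rewrite eqxx.
by case/andP=> -> /IH [x [H1 H2]]; exists x; rewrite H1.
Qed.

Lemma walkb_last E a l c b : walkb E a (rcons l c) b -> (E c).2 = b.
Proof.
rewrite -cats1 => /walkb_catE [x [_ /=]] /andP[_ /eqP] //.
Qed.

Lemma trail_forced E v w vs l : trailE E v w vs -> uniq (v :: vs) ->
  (forall c, c \notin w -> (E c).1 \notin belast v vs) ->
  walkb E v l (last v vs) ->
  exists l', l = w ++ l' /\ walkb E (last v vs) l' (last v vs).
Proof.
elim: w v vs l => [|c w IH] v [|v' vs] l //=.
  by move=> _ _ _ H; exists l.
case/andP=> /eqP Ec Ht /andP[vnin Hu] Hout.
case: l => [|c' l] /=.
  move=> /eqP Hv; exfalso; move: vnin; rewrite Hv.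
  by rewrite mem_last.
case/andP=> /eqP Ec' Hw.
have cc' : c' = c.
  apply/eqP; apply: contraT => ne.
  have Hc'w : c' \in w.
    apply: contraT => nw; have := Hout c'.
    by rewrite inE negb_or ne nw Ec' mem_head => /(_ isT).
  have := trailE_src Ht Hc'w; rewrite Ec' => /mem_belast.
  by rewrite (negbTE vnin).
move: Ec' Hw; rewrite cc' Ec /= => _ Hw.
have Hout' : forall c0, c0 \notin w -> (E c0).1 \notin belast v' vs.
  move=> c0 c0w; case: (c0 =P c) => [->|/eqP ne].
    by rewrite Ec /=; apply: contra vnin => /mem_belast.
  by have := Hout c0; rewrite inE negb_or ne c0w /= inE negb_or => /(_ isT) /andP[].
have [l' [-> Hl']] := IH _ _ _ Ht Hu Hout' Hw.
by exists l'.
Qed.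
End Trail.
Section Mono.
Variable n : nat.
Implicit Types (m : quasi_mono n) (l w : seq 'I_n).

Definition Cs m : {set 'I_n} := [set i | m.1 i != None].
Definition src m i : 'I_n := if m.1 i is Some p then p.1 else i.
Definition tgt m i : 'I_n := if m.1 i is Some p then p.2 else i.

Definition good m : bool := [&& ml_mono m,
  [forall i in Cs m, forall j in Cs m, (src m i == src m j) ==> (i == j)],
  [forall i in Cs m, forall j in Cs m, (tgt m i == tgt m j) ==> (i == j)] &
  [forall i in Cs m, exists j in Cs m, src m j == tgt m i]].

Lemma ml_memC m i : ml_mono m -> (i \in m.2) = (i \notin Cs m).
Proof. by case/andP=> _ /forallP /(_ i) /eqP ->; rewrite inE negbK. Qed.

Lemma ml_uniq m : ml_mono m -> uniq m.2.
Proof. by case/andP. Qed.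

Lemma ml_card m : ml_mono m -> (#|Cs m| + size m.2)%N = n.
Proof.
move=> Hm.
have -> : Cs m = ~: [set i | i \in m.2].
  by apply/setP=> i; rewrite !inE (ml_memC _ Hm) inE negbK.
have Hs : #|[set i | i \in m.2]| = size m.2 by rewrite cardsE; apply/card_uniqP/ml_uniq.
rewrite cardsCs card_ord setCK Hs subnK //.
by rewrite -Hs; apply: leq_trans (max_card _) _; rewrite card_ord.
Qed.

Lemma good_ml m : good m -> ml_mono m. Proof. by case/andP. Qed.

Lemma good_src m : good m -> {in Cs m &, injective (src m)}.
Proof.
case/and4P=> _ /forallP H _ _ i j Hi Hj Hs.
by have /forall_inP/(_ _ Hj) := implyP (H i) Hi; rewrite Hs eqxx => /eqP.
Qed.

Lemma good_tgt m : good m -> {in Cs m &, injective (tgt m)}.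
Proof.
case/and4P=> _ _ /forallP H _ i j Hi Hj Hs.
by have /forall_inP/(_ _ Hj) := implyP (H i) Hi; rewrite Hs eqxx => /eqP.
Qed.

Lemma good_ex m i : good m -> i \in Cs m -> exists2 j, j \in Cs m & src m j = tgt m i.
Proof.
case/and4P=> _ _ _ /forall_inP H /H /exists_inP [j Hj /eqP]; by exists j.
Qed.

Definition nxt m i : 'I_n :=
  if i \in Cs m then odflt i [pick j in Cs m | src m j == tgt m i] else i.

Lemma nxt_out m i : i \notin Cs m -> nxt m i = i.
Proof. by rewrite /nxt => /negbTE ->. Qed.

Lemma nxtC m i : good m -> i \in Cs m -> nxt m i \in Cs m /\ src m (nxt m i) = tgt m i.
Proof.
move=> Hg Hi; rewrite /nxt Hi; case: pickP => [j /andP[Hj /eqP Hs]|] //=.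
by have [j Hj Hs] := good_ex Hg Hi => /(_ j); rewrite Hj Hs eqxx.
Qed.

Lemma nxt_eq m i j : good m -> i \in Cs m -> j \in Cs m -> src m j = tgt m i -> nxt m i = j.
Proof.
move=> Hg Hi Hj Hs; have [H1 H2] := nxtC Hg Hi.
by apply: (good_src Hg) => //; rewrite H2.
Qed.

Lemma nxt_inj m : good m -> injective (nxt m).
Proof.
move=> Hg i j; case: (boolP (i \in Cs m)) => Hi; case: (boolP (j \in Cs m)) => Hj.
- have [Ci Si] := nxtC Hg Hi; have [Cj Sj] := nxtC Hg Hj.
  by move=> E; apply: (good_tgt Hg) => //; rewrite -Si -Sj E.
- have [Ci _] := nxtC Hg Hi; rewrite (nxt_out Hj) => E.
  by move: Hj; rewrite -E Ci.
- have [Cj _] := nxtC Hg Hj; rewrite (nxt_out Hi) => E.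
  by move: Hi; rewrite E Cj.
- by rewrite (nxt_out Hi) (nxt_out Hj).
Qed.

Lemma orbit_pred (T : finType) (f : T -> T) x y :
  injective f -> f y \in fingraph.orbit f x -> y \in fingraph.orbit f x.
Proof.
move=> inj; rewrite -!fconnect_orbit => H.
apply: connect_trans H _; rewrite fconnect_f; exact: cycle_orbit.
Qed.

Lemma orbitC m k : good m -> k \in Cs m -> {subset fingraph.orbit (nxt m) k <= Cs m}.
Proof.
move=> Hg Hk x; rewrite /orbit => /trajectP [i _ ->].
elim: i => [|i IH] //=; exact: (nxtC Hg IH).1.
Qed.

Definition plus m k : quasi_mono n :=
  ([ffun i => if i \in fingraph.orbit (nxt m) k then None else m.1 i], m.2 ++ fingraph.orbit (nxt m) k).

Lemma Cs_plus m k : Cs (plus m k) = Cs m :\: [set i | i \in fingraph.orbit (nxt m) k].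
Proof. by apply/setP=> i; rewrite !inE ffunE; case: ifP. Qed.

Lemma src_plus m k i : i \in Cs (plus m k) -> src (plus m k) i = src m i.
Proof. by rewrite Cs_plus !inE /src ffunE => /andP[/negbTE -> _]. Qed.

Lemma tgt_plus m k i : i \in Cs (plus m k) -> tgt (plus m k) i = tgt m i.
Proof. by rewrite Cs_plus !inE /tgt ffunE => /andP[/negbTE -> _]. Qed.

Lemma plus_good m k : good m -> k \in Cs m ->
  good (plus m k) /\ (#|Cs (plus m k)| < #|Cs m|)%N.
Proof.
move=> Hg Hk; have Hml := good_ml Hg.
have oC := orbitC Hg Hk.
have Cp i : i \in Cs (plus m k) -> i \in Cs m.
  by rewrite Cs_plus inE => /andP[].
split; last first.
  apply: proper_card; apply/properP; split.
    by apply/subsetP=> i /Cp.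
  by exists k => //; rewrite Cs_plus !inE in_orbit.
apply/and4P; split.
- apply/andP; split.
    rewrite cat_uniq (ml_uniq Hml) orbit_uniq andbT /=.
    apply/hasPn=> x /oC; rewrite (ml_memC _ Hml) => ->; done.
  apply/forallP=> i; rewrite /= ffunE mem_cat; case: ifP => Ho.
    by rewrite orbT eqxx.
  by rewrite orbF; case/andP: Hml => _ /forallP /(_ i).
- apply/forall_inP=> i Hi; apply/forall_inP=> j Hj.
  rewrite (src_plus Hi) (src_plus Hj); apply/implyP=> /eqP.
  by move/(good_src Hg (Cp _ Hi) (Cp _ Hj)) ->.
- apply/forall_inP=> i Hi; apply/forall_inP=> j Hj.
  rewrite (tgt_plus Hi) (tgt_plus Hj); apply/implyP=> /eqP.
  by move/(good_tgt Hg (Cp _ Hi) (Cp _ Hj)) ->.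
- apply/forall_inP=> i Hi.
  have [C1 S1] := nxtC Hg (Cp _ Hi).
  have C1' : nxt m i \in Cs (plus m k).
    rewrite Cs_plus in_setD C1 andbT inE.
    move: Hi; rewrite Cs_plus in_setD inE => /andP[Hio _].
    by apply: contra Hio => Ho; exact: (orbit_pred (nxt_inj Hg) Ho).
  apply/exists_inP; exists (nxt m i) => //.
  by rewrite (src_plus C1') (tgt_plus Hi) S1.
Qed.

Lemma nxt_plus m k i : good m -> k \in Cs m -> i \in Cs (plus m k) ->
  nxt (plus m k) i = nxt m i.
Proof.
move=> Hg Hk Hi; have [Hg' _] := plus_good Hg Hk.
have Cp : i \in Cs m by move: Hi; rewrite Cs_plus inE => /andP[].
have [C1 S1] := nxtC Hg Cp.
have C1' : nxt m i \in Cs (plus m k).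
  rewrite Cs_plus in_setD C1 andbT inE.
  move: Hi; rewrite Cs_plus in_setD inE => /andP[Hio _].
  by apply: contra Hio => Ho; exact: (orbit_pred (nxt_inj Hg) Ho).
by apply: nxt_eq => //; rewrite (src_plus C1') (tgt_plus Hi).
Qed.
End Mono.
Section Generic.
Variable n : nat.
Variable F : fieldType.
Implicit Types (m : quasi_mono n) (f : quasi_mono n -> F).

Definition FW (W : seq 'I_n) : quasi_mono n := ([ffun _ => None], W).
Definition Zprop f := forall m, ~~ good m -> f m = 0.
Definition Rprop f := forall m k, good m -> k \in Cs m -> f (plus m k) = - f m.

Lemma rot_step f u o x : Rprop f -> uniq (u ++ o) -> (forall i, i \in u ++ o) -> x \in o ->
  f (FW (u ++ o)) = f (FW (u ++ rot (index x o) o)).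
Proof.
move=> HR Hu Hc xo.
rewrite cat_uniq in Hu; case/and3P: Hu => uu /hasPn dis uo.
pose mo : quasi_mono n := ([ffun c => if c \in o then Some (c, next o c) else None], u).
have Cmo c : (c \in Cs mo) = (c \in o) by rewrite inE ffunE; case: ifP.
have Smo c : c \in o -> src mo c = c by rewrite /src ffunE => ->.
have Tmo c : c \in o -> tgt mo c = next o c by rewrite /tgt ffunE => ->.
have uo' c : (c \in u) = (c \notin o).
  apply/idP/idP => [cu|co]; first by apply: contraL cu => /dis.
  by have := Hc c; rewrite mem_cat (negbTE co) orbF.
have Hg : good mo.
  apply/and4P; split.
  - apply/andP; split => //; apply/forallP=> c /=; rewrite ffunE uo'.
    by case: ifP.
  - apply/forall_inP=> i; rewrite Cmo => Hi; apply/forall_inP=> j; rewrite Cmo => Hj.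
    by rewrite (Smo _ Hi) (Smo _ Hj); apply/implyP.
  - apply/forall_inP=> i; rewrite Cmo => Hi; apply/forall_inP=> j; rewrite Cmo => Hj.
    rewrite (Tmo _ Hi) (Tmo _ Hj); apply/implyP => /eqP H.
    by rewrite -(prev_next uo i) H prev_next.
  - apply/forall_inP=> i; rewrite Cmo => Hi; apply/exists_inP; exists (next o i).
      by rewrite Cmo mem_next.
    by rewrite (Smo _ (_ : next o i \in o)) ?mem_next // (Tmo _ Hi).
have Nmo c : c \in o -> nxt mo c = next o c.
  move=> co; apply: nxt_eq => //; rewrite ?Cmo ?mem_next //.
  by rewrite (Smo _ (_ : next o c \in o)) ?mem_next // (Tmo _ co).
have Hcyc : fcycle (nxt mo) o.
  by apply: cycle_from_next => // c co; rewrite /= Nmo.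
have Eplus y : y \in o -> plus mo y = FW (u ++ rot (index y o) o).
  move=> yo; rewrite /plus (fingraph.orbitE Hcyc uo yo) /FW; congr (_, _).
  by apply/ffunP=> c; rewrite !ffunE mem_rot; case: (c \in o).
have [y [o' Eo]] : exists y o', o = y :: o' by case: (o) xo => // y o' _; exists y, o'.
have yo : y \in o by rewrite Eo mem_head.
have Hy : y \in Cs mo by rewrite Cmo.
have Hx : x \in Cs mo by rewrite Cmo.
have i0 : index y o = 0%N by rewrite Eo /= eqxx.
have := HR _ _ Hg Hy; rewrite Eplus // i0 rot0 => ->.
by rewrite -(HR _ _ Hg Hx) Eplus.
Qed.

Lemma perm_step f : Rprop f -> forall q u q', perm_eq q q' -> uniq (u ++ q) ->
  (forall i, i \in u ++ q) -> f (FW (u ++ q)) = f (FW (u ++ q')).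
Proof.
move=> HR; elim=> [|x q1 IH] u q' Hp Hu Hc.
  by case: q' Hp => // y q' /perm_size.
have xq' : x \in q' by rewrite -(perm_mem Hp) mem_head.
have Hu' : uniq (u ++ q') by rewrite -(perm_uniq (_ : perm_eq (u ++ x :: q1) (u ++ q'))) // perm_cat2l.
have Hc' : forall i, i \in u ++ q'.
  by move=> i; rewrite -(perm_mem (_ : perm_eq (u ++ x :: q1) (u ++ q'))) // perm_cat2l.
rewrite (rot_step HR Hu' Hc' xq') (rot_index xq') -!cat_rcons.
apply: IH; last by move=> i; rewrite cat_rcons.
  rewrite -(perm_cons x) -(rot_index xq'); apply: perm_trans Hp _.
  by rewrite perm_sym perm_rot.
by rewrite cat_rcons.
Qed.

Lemma generic f : Zprop f -> Rprop f -> f (FW (enum 'I_n)) = 0 -> forall m, f m = 0.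
Proof.
move=> HZ HR H0 m.
move: {2}#|Cs m| (leqnn #|Cs m|) => N; elim: N m => [|N IH] m HN.
all: case: (boolP (good m)) => Hg; last exact: HZ.
all: case: (set_0Vmem (Cs m)) => [C0|[k Hk]].
- have -> : m = FW m.2.
    case: m Hg C0 {HN} => f0 w Hg C0; congr (_, _); apply/ffunP=> i; rewrite ffunE.
    by apply/eqP; apply: contraT => Hi; have := in_set0 i; rewrite -C0 inE Hi.
  rewrite -[m.2]cat0s (perm_step HR (q' := enum 'I_n)) //.
  + apply: uniq_perm; rewrite ?enum_uniq ?(ml_uniq (good_ml Hg)) // => i.
    by rewrite mem_enum (ml_memC _ (good_ml Hg)) C0 in_set0.
  + exact: (ml_uniq (good_ml Hg)).
  + by move=> i; rewrite (ml_memC _ (good_ml Hg)) C0 in_set0.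
- by move: HN; rewrite leqn0 => /eqP/cards0_eq C0; move: Hk; rewrite C0 in_set0.
- have -> : m = FW m.2.
    case: m Hg C0 {HN} => f0 w Hg C0; congr (_, _); apply/ffunP=> i; rewrite ffunE.
    by apply/eqP; apply: contraT => Hi; have := in_set0 i; rewrite -C0 inE Hi.
  rewrite -[m.2]cat0s (perm_step HR (q' := enum 'I_n)) //.
  + apply: uniq_perm; rewrite ?enum_uniq ?(ml_uniq (good_ml Hg)) // => i.
    by rewrite mem_enum (ml_memC _ (good_ml Hg)) C0 in_set0.
  + exact: (ml_uniq (good_ml Hg)).
  + by move=> i; rewrite (ml_memC _ (good_ml Hg)) C0 in_set0.
- have [Hg' Hlt] := plus_good Hg Hk.
  have := HR _ _ Hg Hk; rewrite IH; last by rewrite -ltnS (leq_trans Hlt).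
  by move/eqP; rewrite eq_sym oppr_eq0 => /eqP.
Qed.
End Generic.
Section TrailConfig.
Variable n : nat.
Implicit Types (m : quasi_mono n) (l w vs : seq 'I_n) (E : 'I_n -> 'I_n * 'I_n).

Lemma trailE_idx E v w vs : uniq w -> size vs = size w ->
  (forall c, c \in w -> E c = (nth v (v :: vs) (index c w), nth v vs (index c w))) ->
  trailE E v w vs.
Proof.
elim: w v vs => [|c w IH] v [|v' vs] //= /andP[cw uw] [Hs] HE.
rewrite (HE c (mem_head _ _)) /= eqxx eqxx /=; apply: IH => // c' c'w.
have ne : (c == c') = false by apply/negbTE; apply: contraNneq cw => ->.
rewrite (HE c' _) /=; last by rewrite inE c'w orbT.
rewrite ne /=; have Hi : (index c' w < size w)%N by rewrite index_mem.
congr (_, _); apply: set_nth_default => //=; first by rewrite Hs ltnS ltnW.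
by rewrite Hs.
Qed.

Definition cfg m v vs (c : 'I_n) : 'I_n * 'I_n :=
  if m.1 c is Some p then p else (nth v (v :: vs) (index c m.2), nth v vs (index c m.2)).

Lemma cfg_C m v vs c : c \in Cs m -> cfg m v vs c = (src m c, tgt m c).
Proof. by rewrite inE /cfg /src /tgt; case: (m.1 c) => [[]|]. Qed.

Lemma cfg_trail m v vs : ml_mono m -> size vs = size m.2 -> trailE (cfg m v vs) v m.2 vs.
Proof.
move=> Hm Hs; apply: trailE_idx => //; first exact: ml_uniq.
move=> c cw; rewrite /cfg; move: cw; rewrite (ml_memC _ Hm) inE negbK => /eqP -> //.
Qed.

Lemma cfg_mk m v vs : ml_mono m -> mk (cfg m v vs) m.2 = m.
Proof.
move=> Hm; case: m Hm => f w Hm; rewrite /mk /=; congr (_, _); apply/ffunP=> c.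
rewrite ffunE (ml_memC c Hm) inE /cfg /=; case: (f c) => //.
Qed.

Lemma choose_trail m : ml_mono m -> ~~ good m ->
  exists L0, exists y, [/\ uniq L0, size L0 = size m.2,
    {subset L0 <= ~: (src m @: Cs m)}, y \notin L0 &
    (y \in ~: (src m @: Cs m)) || (y \in ~: (tgt m @: Cs m))].
Proof.
move=> Hm Hng; set A := ~: (src m @: Cs m); set B := ~: (tgt m @: Cs m).
have HC := ml_card Hm.
have cA : #|A| = (n - #|src m @: Cs m|)%N by rewrite cardsCs setCK card_ord.
have cB : #|B| = (n - #|tgt m @: Cs m|)%N by rewrite cardsCs setCK card_ord.
have sA : (#|src m @: Cs m| <= #|Cs m|)%N by apply: leq_imset_card.
have sB : (#|tgt m @: Cs m| <= #|Cs m|)%N by apply: leq_imset_card.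
have rA : (size m.2 <= #|A|)%N by rewrite cA; lia.
case: (ltnP (size m.2) #|A|) => HA.
  have Hsz : (size m.2 < size (enum A))%N by rewrite -cardE.
  case Hd : (drop (size m.2) (enum A)) => [|y rest].
    by move: (size_drop (size m.2) (enum A)); rewrite Hd /= => /esym/eqP; rewrite subn_eq0 leqNgt Hsz.
  exists (take (size m.2) (enum A)), y; split.
  - by apply: take_uniq; apply: enum_uniq.
  - by rewrite size_take Hsz.
  - by move=> x /mem_take; rewrite mem_enum.
  - have Hu := enum_uniq (mem A).
    rewrite -(cat_take_drop (size m.2) (enum A)) Hd cat_uniq in Hu.
    by case/and3P: Hu => _ /hasPn H _; apply: H; rewrite mem_head.
  - have : y \in drop (size m.2) (enum A) by rewrite Hd mem_head.
    by move/mem_drop; rewrite mem_enum => ->.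
have eA : #|A| = size m.2 by apply/eqP; rewrite eqn_leq HA rA.
have Hsi : {in Cs m &, injective (src m)}.
  have H : (#|Cs m| <= #|src m @: Cs m|)%N by move: eA; rewrite cA; lia.
  by apply/imset_injP; rewrite eqn_leq sA H.
have [y yB yA] : exists2 y, y \in B & y \notin A.
  apply/exists_inP; apply: contraT; rewrite negb_exists_in => /forall_inP HBA.
  have sBA : B \subset A by apply/subsetP => y yB; have := HBA y yB; rewrite negbK.
  have rB : (size m.2 <= #|B|)%N by rewrite cB; lia.
  have /eqP EBA : B == A by rewrite eqEcard sBA eA.
  have Eim : tgt m @: Cs m = src m @: Cs m by apply: setC_inj.
  apply: contraR Hng => _; apply/and4P; split => //.
  - apply/forall_inP=> i Hi; apply/forall_inP=> j Hj; apply/implyP=> /eqP.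
    by move/(Hsi _ _ Hi Hj) ->.
  - have Hti : {in Cs m &, injective (tgt m)}.
      apply/imset_injP; rewrite Eim; apply/imset_injP; exact: Hsi.
    apply/forall_inP=> i Hi; apply/forall_inP=> j Hj; apply/implyP=> /eqP.
    by move/(Hti _ _ Hi Hj) ->.
  - apply/forall_inP=> i Hi; have : tgt m i \in tgt m @: Cs m by apply: imset_f.
    by rewrite Eim => /imsetP [j Hj ->]; apply/exists_inP; exists j.
exists (enum A), y; split.
- exact: enum_uniq.
- by rewrite -cardE.
- by move=> x; rewrite mem_enum.
- by rewrite mem_enum.
- by rewrite yB orbT.
Qed.
End TrailConfig.
Lemma traj_orbit (T : finType) (f : T -> T) x q : (0 < q)%N -> uniq (traject f x q) ->
  iter q f x = x -> traject f x q = fingraph.orbit f x.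
Proof.
case: q => // q _ Hu Hit.
have Hc : fcycle f (traject f x q.+1).
  rewrite trajectS /=.
  have -> : rcons (traject f (f x) q) x = traject f (f x) q.+1.
    by rewrite trajectSr -iterSr Hit.
  exact: fpath_traject.
rewrite (fingraph.orbitE Hc Hu) ?trajectS ?mem_head //= eqxx rot0 //.
Qed.

Section PSide.
Variable n : nat.
Variable F : fieldType.
Variable P : quasi_poly F n.
Hypothesis HP : quasi_multilinear P.
Hypothesis HI : quasi_identity P.
Implicit Types (m : quasi_mono n) (l w vs : seq 'I_n) (E : 'I_n -> 'I_n * 'I_n).

Lemma P_eq0 E a b ms : uniq ms -> (forall m', ml_mono m' -> ind E a b m' = (m' \in ms)) ->
  \sum_(m <- ms) quasi_coef P m = 0.
Proof.
move=> Hu Hind; have := HI (fun k => delta_mx (E k).1 (E k).2).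
move/(congr1 (fun M : 'M[F]_n => M a b)); rewrite eval_entry mxE.
by rewrite (coef_sum HP Hu Hind).
Qed.

Lemma P_nonml m : ~~ ml_mono m -> quasi_coef P m = 0.
Proof.
move=> Hm; rewrite /quasi_coef big_seq_cond big1 // => t /andP[tP /eqP Et].
by move: Hm; rewrite -Et (allP HP _ tP).
Qed.

Lemma split_rcons (L0 : seq 'I_n) y : exists v vs, [/\ v :: vs = rcons L0 y, belast v vs = L0 & last v vs = y].
Proof.
case: L0 => [|x L0]; first by exists y, [::].
by exists x, (rcons L0 y); rewrite belast_rcons last_rcons.
Qed.

Lemma walk_C m E x l b : good m -> x \in Cs m -> {subset l <= Cs m} ->
  (forall c, c \in Cs m -> E c = (src m c, tgt m c)) ->
  walkb E (src m x) l b -> l = traject (nxt m) x (size l) /\ b = src m (iter (size l) (nxt m) x).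
Proof.
move=> Hg; elim: l x => [|c l IH] x Hx Hl HE /=; first by move/eqP.
have Hc : c \in Cs m by apply: Hl; rewrite mem_head.
rewrite HE //= => /andP[/eqP Hs Hw].
have cx : c = x by apply: (good_src Hg).
subst c; have [Cn Sn] := nxtC Hg Hx.
rewrite -Sn in Hw.
have Hl' : {subset l <= Cs m} by move=> y yl; apply: Hl; rewrite inE yl orbT.
have [-> ->] := IH (nxt m x) Cn Hl' HE Hw.
by rewrite size_traject -iterSr iterS.
Qed.

Lemma walk_C_back m E x q : good m -> x \in Cs m ->
  (forall c, c \in Cs m -> E c = (src m c, tgt m c)) ->
  walkb E (src m x) (traject (nxt m) x q) (src m (iter q (nxt m) x)).
Proof.
move=> Hg; elim: q x => [|q IH] x Hx HE /=; first by rewrite eqxx.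
rewrite HE //= eqxx /=; have [Cn Sn] := nxtC Hg Hx.
by rewrite -Sn -iterS iterSr; apply: IH.
Qed.

Lemma P_Z : Zprop (quasi_coef P).
Proof.
move=> m Hng; case: (boolP (ml_mono m)) => Hm; last exact: P_nonml.
have [L0 [y [uL0 sL0 AL0 yL0 yAB]]] := choose_trail Hm Hng.
have [v [vs [Evs Hb Hl]]] := split_rcons L0 y.
have Hsz : size vs = size m.2.
  by have := congr1 size Evs; rewrite size_rcons sL0 /= => [[]].
have Ht := cfg_trail v Hm Hsz.
have HE : forall c, c \in Cs m -> cfg m v vs c = (src m c, tgt m c) by move=> c; apply: cfg_C.
have := @P_eq0 (cfg m v vs) v (last v vs) [:: m] isT; rewrite big_seq1; apply => m' Hm'.
rewrite inE; apply/idP/idP; last first.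
  by move/eqP ->; rewrite -[X in ind _ _ _ X](cfg_mk v vs Hm) ind_mk; apply: trailE_walk.
case/(ind_ml Hm') => Em' Hu Hw.
have Huv : uniq (v :: vs) by rewrite Evs rcons_uniq yL0.
have Hout : forall c, c \notin m.2 -> (cfg m v vs c).1 \notin belast v vs.
  move=> c; rewrite (ml_memC _ Hm) negbK => Hc; rewrite HE //= Hb.
  apply/negP => /AL0; rewrite inE => /negP; apply; exact: imset_f.
have [l' [El' Hw']] := trail_forced Ht Huv Hout Hw.
have l'0 : l' = [::].
  case: l' El' Hw' => // c l'' El' Hw'; exfalso.
  have Hu' := Hu; rewrite El' cat_uniq in Hu'; case/and3P: Hu' => _ /hasPn Hdis _.
  have HC d : d \in c :: l'' -> d \in Cs m.
    by move=> dl; have := Hdis d dl; rewrite (ml_memC _ Hm) negbK.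
  have Hc := HC c (mem_head _ _).
  have /= := Hw'; rewrite HE // Hl => /andP[/eqP Hsy _].
  have yB : y \in ~: (tgt m @: Cs m).
    by move: yAB; rewrite !in_setC -Hsy (imset_f (src m) Hc).
  have Hd := HC _ (mem_last c l'').
  move: Hw'; rewrite Hl lastI => /walkb_last; rewrite HE // => /= Hty.
  by move: yB; rewrite in_setC -Hty (imset_f (tgt m) Hd).
by rewrite Em' El' l'0 cats0 cfg_mk.
Qed.
End PSide.
Section PSideR.
Variable n : nat.
Variable F : fieldType.
Variable P : quasi_poly F n.
Hypothesis HP : quasi_multilinear P.
Hypothesis HI : quasi_identity P.
Implicit Types (m : quasi_mono n).

Lemma iter_C m x q : good m -> x \in Cs m -> iter q (nxt m) x \in Cs m.
Proof. by move=> Hg Hx; elim: q => //= q IH; exact: (nxtC Hg IH).1. Qed.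

Lemma P_R : Rprop (quasi_coef P).
Proof.
move=> m k Hg Hk; have Hm := good_ml Hg.
set A := ~: (src m @: Cs m).
have eA : #|A| = size m.2.
  have HC := ml_card Hm.
  have Hi : #|src m @: Cs m| = #|Cs m| by apply/eqP/imset_injP; exact: good_src.
  rewrite cardsCs setCK card_ord Hi; lia.
set y := src m k.
have yL0 : y \notin enum A by rewrite mem_enum in_setC negbK imset_f.
have [v [vs [Evs Hb Hl]]] := split_rcons (enum A) y.
have Hsz : size vs = size m.2.
  by have := congr1 size Evs; rewrite size_rcons -cardE eA /= => [[]].
have Ht := cfg_trail v Hm Hsz.
have HE : forall c, c \in Cs m -> cfg m v vs c = (src m c, tgt m c) by move=> c; apply: cfg_C.
have Huv : uniq (v :: vs) by rewrite Evs rcons_uniq yL0 enum_uniq.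
have Hout : forall c, c \notin m.2 -> (cfg m v vs c).1 \notin belast v vs.
  move=> c; rewrite (ml_memC _ Hm) negbK => Hc; rewrite HE //= Hb mem_enum in_setC negbK.
  exact: imset_f.
set o := fingraph.orbit (nxt m) k.
have oC : {subset o <= Cs m} := orbitC Hg Hk.
have Hplus : mk (cfg m v vs) (m.2 ++ o) = plus m k.
  rewrite /mk /plus; congr (_, _); apply/ffunP=> c; rewrite !ffunE mem_cat.
  case: (boolP (c \in o)) => co; first by rewrite orbT.
  rewrite orbF (ml_memC _ Hm) inE /cfg; case: (m.1 c) => //.
have Hne : m != plus m k.
  apply/negP => /eqP /(congr1 (fun x => size x.2)) /=.
  rewrite size_cat /o fingraph.size_orbit; move=> /eqP; rewrite -{1}[size m.2]addn0 eqn_add2l => /eqP H0.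
  by have := fingraph.order_gt0 (nxt m) k; rewrite -H0.
have := @P_eq0 _ _ P HP HI (cfg m v vs) v (last v vs) [:: m; plus m k].
rewrite /= inE Hne /= big_cons big_seq1 => H.
suff: quasi_coef P m + quasi_coef P (plus m k) = 0.
  by move=> H0; apply/eqP; rewrite -addr_eq0 addrC H0.
apply: H => [//|m' Hm']; rewrite !inE; apply/idP/idP; last first.
  case/orP => /eqP ->.
    by rewrite -[X in ind _ _ _ X](cfg_mk v vs Hm) ind_mk; apply: trailE_walk.
  rewrite -Hplus ind_mk; apply: walkb_cat (trailE_walk Ht) _.
  rewrite Hl; have := walk_C_back (fingraph.order (nxt m) k) Hg Hk HE.
  by rewrite (fingraph.iter_order (nxt_inj Hg)).
case/(ind_ml Hm') => Em' Hu Hw.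
have [l' [El' Hw']] := trail_forced Ht Huv Hout Hw.
have Hu' := Hu; rewrite El' cat_uniq in Hu'; case/and3P: Hu' => _ /hasPn Hdis ul'.
have l'C : {subset l' <= Cs m}.
  by move=> d dl; have := Hdis d dl; rewrite (ml_memC _ Hm) negbK.
rewrite Hl in Hw'.
have [El'2 Hyy] := walk_C Hg Hk l'C HE Hw'.
have Hit : iter (size l') (nxt m) k = k.
  by apply: (good_src Hg) => //; apply: iter_C.
case: (posnP (size l')) => Hs.
  move/eqP: Hs; rewrite size_eq0 => /eqP l'0.
  by rewrite Em' El' l'0 cats0 (cfg_mk v vs Hm) eqxx.
have l'o : l' = o by rewrite El'2; apply: traj_orbit => //; rewrite -El'2.
by rewrite Em' El' l'o Hplus eqxx orbT.
Qed.
End PSideR.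
Section QCycle.
Variable n : nat.
Local Notation wd := (@widen_ord n n.+1 (leqnSn n)).
Local Notation mx := (@ord_max n).
Implicit Types (s : 'S_n.+1) (w : seq 'I_n).

Lemma wd_inj : injective wd.
Proof. by move=> i j /(congr1 val) /= /val_inj. Qed.

Lemma wd_mx i : (wd i == mx) = false.
Proof. by apply/negbTE; rewrite -val_eqE /= neq_ltn ltn_ord. Qed.

Lemma mx_notin w : mx \notin map wd w.
Proof. by apply/mapP => [[i _ /eqP]]; rewrite eq_sym wd_mx. Qed.

Lemma pmap_wd w : pmap (fun x : 'I_n.+1 => (insub (val x) : option 'I_n)) (map wd w) = w.
Proof.
elim: w => //= i w ->; rewrite /= (_ : insub (val (wd i)) = Some i) //.
by rewrite /= valK.
Qed.

Lemma wd_insub (x : 'I_n.+1) : x != mx -> exists i, x = wd i.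
Proof.
move=> Hx; have Hlt : (val x < n)%N.
  by have := ltn_ord x; rewrite ltnS leq_eqVlt => /orP[/eqP Ex|//]; move: Hx; rewrite -val_eqE /= Ex eqxx.
by exists (Ordinal Hlt); apply: val_inj.
Qed.

Lemma map_pmap_wd (l : seq 'I_n.+1) : mx \notin l ->
  map wd (pmap (fun x : 'I_n.+1 => (insub (val x) : option 'I_n)) l) = l.
Proof.
elim: l => //= x l IH; rewrite inE negb_or => /andP[Hx Hl]; rewrite eq_sym in Hx.
have [i ->] := wd_insub Hx; rewrite valK /= IH //.
Qed.

Lemma uniq_pw w : uniq w -> uniq (mx :: map wd w).
Proof. by move=> Hu; rewrite /= mx_notin (map_inj_uniq wd_inj). Qed.

Lemma cw_orbit s : fingraph.orbit (fun x => s x) mx = mx :: map wd (cycle_word s).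
Proof.
rewrite /cycle_word.
have Eo : fingraph.orbit (fun x => s x) mx =
  mx :: traject (fun x => s x) (s mx) (fingraph.order (fun x => s x) mx).-1.
  by rewrite /fingraph.orbit -fingraph.orderSpred trajectS.
have := fingraph.orbit_uniq (fun x => s x) mx; rewrite Eo => /= /andP[Hn _].
rewrite /= (_ : insub (val mx) = None) ?map_pmap_wd //.
by apply: insubF; rewrite /= ltnn.
Qed.

Lemma cw_fcycle s : fcycle (fun x => s x) (mx :: map wd (cycle_word s)).
Proof. by rewrite -cw_orbit; apply: fingraph.cycle_orbit; apply: perm_inj. Qed.

Lemma cw_uniq s : uniq (cycle_word s).
Proof.
have := fingraph.orbit_uniq (fun x => s x) mx; rewrite cw_orbit /= => /andP[_].
by rewrite (map_inj_uniq wd_inj).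
Qed.

Lemma fcycle_cw s w : uniq w -> fcycle (fun x => s x) (mx :: map wd w) -> cycle_word s = w.
Proof.
move=> Hu Hc; have Hu' := uniq_pw Hu.
have := fingraph.orbitE Hc Hu' (mem_head _ _); rewrite /= eqxx rot0 => Eo.
by rewrite /cycle_word Eo /= (_ : insub (val mx) = None) ?pmap_wd //; apply: insubF; rewrite /= ltnn.
Qed.

Lemma mem_cw s i : (i \in cycle_word s) = (wd i \in fingraph.orbit (fun x => s x) mx).
Proof. by rewrite cw_orbit inE wd_mx /= (mem_map wd_inj). Qed.
End QCycle.
Section QSum.
Variable n : nat.
Variable F : fieldType.
Implicit Types (s : 'S_n.+1) (m : quasi_mono n).

Definition jm m : {ffun 'I_n -> 'I_n} := [ffun i => src m i].
Definition matchQ s m : bool := (phi_mono s (jm m) == m) && phi_index_ok s (jm m).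

Lemma match_j s m (j : {ffun 'I_n -> 'I_n}) :
  phi_index_ok s j && (phi_mono s j == m) = (j == jm m) && matchQ s m.
Proof.
apply/idP/idP; last by case/andP => /eqP -> /andP[-> ->].
case/andP=> Hok /eqP Hm.
have Ej : j = jm m.
  apply/ffunP=> i; rewrite /jm ffunE /src -Hm /phi_mono /= ffunE.
  case: ifP => // Hi; by move/forallP: Hok => /(_ i); rewrite Hi => /eqP.
by rewrite /matchQ -Ej Hm !eqxx Hok.
Qed.

Lemma Qc_sum m : quasi_coef (Qn F n) m =
  \sum_(s : 'S_n.+1) (-1) ^+ odd_perm s * (matchQ s m)%:R.
Proof.
rewrite /quasi_coef /Qn big_flatten /= big_map big_enum /=.
rewrite [RHS](eq_bigl (fun s => s \in [set: 'S_n.+1])); last by move=> s; rewrite inE.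
apply: eq_bigr => s _.
rewrite big_map /phi big_map big_filter_cond big_enum_cond /=.
rewrite (eq_bigl (fun j => (j == jm m) && matchQ s m)); last first.
  by move=> j; rewrite match_j.
rewrite -big_distrr /=; congr (_ * _).
case: (matchQ s m); last by rewrite big_pred0 // => j; rewrite andbF.
rewrite (eq_bigl (pred1 (jm m))) => [|j]; last by rewrite andbT.
by rewrite big_pred1_eq.
Qed.
End QSum.
Section QProps.
Variable n : nat.
Variable F : fieldType.
Local Notation wd := (@widen_ord n n.+1 (leqnSn n)).
Local Notation mx := (@ord_max n).
Implicit Types (s : 'S_n.+1) (m : quasi_mono n).

Lemma val_lt (x : 'I_n.+1) : x != mx -> (val x < n)%N.
Proof. by move=> Hx; have [i ->] := wd_insub Hx; rewrite /= ltn_ord. Qed.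

Lemma pos_wd s i : s (wd i) != mx -> wd (perm_on_small s i) = s (wd i).
Proof. by move=> H; apply: val_inj; rewrite /= /perm_on_small val_insubd (val_lt H). Qed.

Lemma insubd_wd (i j : 'I_n) : insubd i (val (wd j)) = j.
Proof. by apply: val_inj; rewrite val_insubd /= ltn_ord. Qed.

Lemma matchQ_props s m : matchQ s m ->
  [/\ ml_mono m, cycle_word s = m.2 &
   forall i, i \in Cs m -> [/\ s (wd i) \notin mx :: map wd m.2,
     wd (perm_on_small s i) = s (wd i), perm_on_small s i \in Cs m &
     tgt m i = src m (perm_on_small s i)]].
Proof.
case/andP => /eqP Hm _.
have E2 : cycle_word s = m.2 by rewrite -Hm.
have E1 i : m.1 i = if i \in cycle_word s then None
                   else Some (jm m i, jm m (perm_on_small s i)).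
  by rewrite -[in LHS]Hm /= ffunE.
have Hml : ml_mono m.
  apply/andP; split; first by rewrite -E2 cw_uniq.
  by apply/forallP => i; rewrite E1 -E2; case: ifP.
split => // i Hi.
have Hic : i \notin cycle_word s by move: Hi; rewrite inE E1; case: ifP.
have Hno : s (wd i) \notin fingraph.orbit (fun x => s x) mx.
  apply: contra Hic => H; rewrite mem_cw; exact: (orbit_pred (@perm_inj _ s) H).
have Hnm : s (wd i) != mx.
  by apply: contraNneq Hno => ->; apply: fingraph.in_orbit.
have Hp := pos_wd Hnm.
have Hpc : perm_on_small s i \in Cs m.
  by rewrite -[_ \in Cs m]negbK -(ml_memC _ Hml) -E2 mem_cw Hp.
split => //; first by rewrite -E2 -cw_orbit.
by rewrite /tgt E1 (negbTE Hic) /= /jm ffunE.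
Qed.

Lemma matchQ_t s m k l : matchQ s m -> k \in Cs m -> l \in Cs m -> src m k = src m l ->
  matchQ (s * tperm (wd k) (wd l)) m.
Proof.
move=> Hs Hk Hl Hkl; have [Hml E2 HC] := matchQ_props Hs.
set t := tperm (wd k) (wd l).
set pw := mx :: map wd m.2.
have kpw : wd k \notin pw.
  by rewrite inE wd_mx /= (mem_map (@wd_inj n)) (ml_memC _ Hml) negbK.
have lpw : wd l \notin pw.
  by rewrite inE wd_mx /= (mem_map (@wd_inj n)) (ml_memC _ Hml) negbK.
have Hcyc : fcycle (fun x => s x) pw by rewrite /pw -E2; apply: cw_fcycle.
have Hcyc' : fcycle (fun x => (s * t)%g x) pw.
  rewrite (@eq_in_cycle _ (mem pw) _ (frel (fun x => s x))) //; last by apply/allP.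
  move=> x y xp _ /=; rewrite permM /t tpermD //.
    by apply: contraNneq kpw => ->; apply: (mem_fcycle Hcyc).
  by apply: contraNneq lpw => ->; apply: (mem_fcycle Hcyc).
have E2' : cycle_word (s * t)%g = m.2 by apply: fcycle_cw => //; exact: ml_uniq.
have Hpos i : src m (perm_on_small (s * t)%g i) = src m (perm_on_small s i).
  rewrite /perm_on_small permM /t.
  case: (s (wd i) =P wd k) => [->|/eqP nk].
    by rewrite tpermL !insubd_wd Hkl.
  case: (s (wd i) =P wd l) => [->|/eqP nl].
    by rewrite tpermR !insubd_wd Hkl.
  by rewrite tpermD // eq_sym.
case/andP: Hs => /eqP Hm Hok.
apply/andP; split.
  apply/eqP; rewrite -[RHS]Hm /phi_mono E2' E2; congr (_, _).
  by apply/ffunP => i; rewrite !ffunE Hpos.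
by move: Hok; rewrite /phi_index_ok E2' E2.
Qed.
End QProps.
Section QZ.
Variable n : nat.
Variable F : fieldType.
Local Notation wd := (@widen_ord n n.+1 (leqnSn n)).
Local Notation mx := (@ord_max n).
Implicit Types (s : 'S_n.+1) (m : quasi_mono n).

Lemma Q_Z (charF0 : [pchar F] =i pred0) : Zprop (fun m => quasi_coef (Qn F n) m).
Proof.
move=> m Hng; rewrite Qc_sum.
case: (boolP (ml_mono m)) => Hml; last first.
  rewrite big1 // => s _; case H: (matchQ s m); last by rewrite mulr0.
  by have [] := matchQ_props H; rewrite (negbTE Hml).
case: (boolP [forall k in Cs m, forall l in Cs m, (src m k == src m l) ==> (k == l)]) => Hinj.
  rewrite big1 // => s _; case H: (matchQ s m); last by rewrite mulr0.
  exfalso; move/negP: Hng; apply; have [_ _ HC] := matchQ_props H.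
  have Hsi : {in Cs m &, injective (src m)}.
    move=> a b Ha Hb Hab; move/forall_inP: Hinj => /(_ a Ha) /forall_inP /(_ b Hb).
    by rewrite Hab eqxx => /eqP.
  apply/and4P; split => //.
  - apply/forall_inP => a Ha; apply/forall_inP => b Hb; apply/implyP => /eqP Hab.
    have [_ Pa Ca Ta] := HC a Ha; have [_ Pb Cb Tb] := HC b Hb.
    have Epos : perm_on_small s a = perm_on_small s b by apply: Hsi; rewrite // -Ta -Tb.
    have : s (wd a) = s (wd b) by rewrite -Pa -Pb Epos.
    by move/perm_inj/(@wd_inj n) ->.
  - apply/forall_inP => a Ha; have [_ Pa Ca Ta] := HC a Ha.
    by apply/exists_inP; exists (perm_on_small s a) => //; rewrite Ta.
case/forall_inPn: Hinj => k Hk /forall_inPn [l Hl]; rewrite negb_imply => /andP[/eqP Hkl Hne].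
set t := tperm (wd k) (wd l).
have Ht s : matchQ (s * t)%g m = matchQ s m.
  apply/idP/idP => H; last exact: matchQ_t.
  have Hl' : src m l = src m k by [].
  by have := matchQ_t H Hk Hl Hkl; rewrite -mulgA tperm2 mulg1.
set S := \sum_s _.
have HS : S = - S.
  rewrite {1}/S (reindex_inj (@mulIg _ t)) /= -sumrN; apply: eq_bigr => s _.
  rewrite Ht odd_permM odd_tperm (inj_eq (@wd_inj n)) Hne signr_addb /=.
  by rewrite mulrN1 mulNr.
have : S *+ 2 = 0 by rewrite mulr2n {2}HS subrr.
rewrite -mulr_natr => /eqP; rewrite mulf_eq0 => /orP[/eqP //|].
have /pcharf0P -> := charF0.
done.
Qed.
End QZ.
Lemma path_eq_belast (T : eqType) (f g : T -> T) x p :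
  (forall y, y \in belast x p -> f y = g y) -> fpath f x p = fpath g x p.
Proof.
elim: p x => //= y p IH x H.
rewrite H ?mem_head // IH // => z zb; apply: H; by rewrite inE zb orbT.
Qed.

Lemma path_map_belast (T U : eqType) (h : T -> U) (f : T -> T) (g : U -> U) x p :
  injective h -> (forall y, y \in belast x p -> g (h y) = h (f y)) ->
  fpath g (h x) (map h p) = fpath f x p.
Proof.
move=> hi; elim: p x => //= y p IH x H.
rewrite H ?mem_head // (inj_eq hi) IH // => z zb; apply: H; by rewrite inE zb orbT.
Qed.

Section QR.
Variable n : nat.
Variable F : fieldType.
Local Notation wd := (@widen_ord n n.+1 (leqnSn n)).
Local Notation mx := (@ord_max n).
Implicit Types (s : 'S_n.+1) (m : quasi_mono n).

Definition pw m : seq 'I_n.+1 := mx :: map wd m.2.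
Definition fm m (x : 'I_n.+1) : 'I_n.+1 :=
  if x \in pw m then next (pw m) x
  else if (insub (val x) : option 'I_n) is Some i then wd (nxt m i) else x.

Lemma fm_out m i : wd i \notin pw m -> fm m (wd i) = wd (nxt m i).
Proof. by rewrite /fm => /negbTE ->; rewrite valK. Qed.

Lemma fm_in m x : x \in pw m -> fm m x = next (pw m) x.
Proof. by rewrite /fm => ->. Qed.

Lemma pw_wd m i : ml_mono m -> (wd i \in pw m) = (i \notin Cs m).
Proof. by move=> Hml; rewrite inE wd_mx /= (mem_map (@wd_inj n)) (ml_memC _ Hml). Qed.

Lemma m1_C m i : i \in Cs m -> m.1 i = Some (src m i, tgt m i).
Proof. by rewrite inE /src /tgt; case: (m.1 i) => [[]|]. Qed.

Lemma matchQ_good s m : good m -> matchQ s m = [forall x, s x == fm m x].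
Proof.
move=> Hg; have Hml := good_ml Hg.
have upw : uniq (pw m) by apply: uniq_pw; exact: ml_uniq.
apply/idP/idP => [H|/forallP H].
  have [_ E2 HC] := matchQ_props H.
  have Hcyc : fcycle (fun x => s x) (pw m) by rewrite /pw -E2; apply: cw_fcycle.
  apply/forallP => x; case: (boolP (x \in pw m)) => xp.
    by rewrite fm_in // (nextE Hcyc xp).
  have xm : x != mx by apply: contraNneq xp => ->; exact: mem_head.
  have [i Ex] := wd_insub xm; subst x; rewrite fm_out //.
  have Hi : i \in Cs m by rewrite -(negbK (i \in Cs m)) -pw_wd.
  have [_ Hp Hc Ht] := HC i Hi.
  by rewrite -Hp (nxt_eq Hg Hi Hc (esym Ht)).
have Hcyc : fcycle (fun x => s x) (pw m).
  by apply: cycle_from_next => // x xp; rewrite /= (eqP (H x)) fm_in.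
have E2 : cycle_word s = m.2 by apply: fcycle_cw; [exact: ml_uniq | exact: Hcyc].
apply/andP; split.
  apply/eqP; rewrite [RHS]surjective_pairing /phi_mono E2; congr (_, _).
  apply/ffunP => i; rewrite !ffunE (ml_memC _ Hml); case: ifP => Hi.
    by move: Hi; rewrite inE negbK => /eqP ->.
  move/negbT: Hi; rewrite negbK => Hi.
  have Hs : s (wd i) = wd (nxt m i) by rewrite (eqP (H _)) fm_out // pw_wd // Hi.
  rewrite /perm_on_small Hs insubd_wd (nxtC Hg Hi).2 m1_C //.
apply/forallP => i; rewrite E2 (ml_memC _ Hml); apply/implyP => Hi.
by rewrite /jm ffunE /src; move: Hi; rewrite inE negbK => /eqP ->.
Qed.
End QR.
Section QK.
Variable n : nat.
Variable F : fieldType.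
Local Notation wd := (@widen_ord n n.+1 (leqnSn n)).
Local Notation mx := (@ord_max n).
Implicit Types (s : 'S_n.+1) (m : quasi_mono n).

Lemma fm_plus m k : good m -> k \in Cs m ->
  forall x, fm (plus m k) x = tperm mx (wd k) (fm m x).
Proof.
move=> Hg Hk; have Hml := good_ml Hg.
have [Hg' _] := plus_good Hg Hk; have Hml' := good_ml Hg'.
set o := fingraph.orbit (nxt m) k.
have oC : {subset o <= Cs m} := orbitC Hg Hk.
have ninj := nxt_inj Hg.
have Hoc : fcycle (nxt m) o by apply: fingraph.cycle_orbit.
have uo : uniq o by apply: fingraph.orbit_uniq.
have [o' Eo] : exists o', o = k :: o'.
  by exists (traject (nxt m) (nxt m k) (fingraph.order (nxt m) k).-1);
     rewrite /o /fingraph.orbit -fingraph.orderSpred trajectS.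
set t := tperm mx (wd k).
set g := fun x => t (fm m x).
have upw : uniq (pw m) by apply: uniq_pw; exact: ml_uniq.
have kpw : wd k \notin pw m by rewrite pw_wd // negbK.
have Epw : pw (plus m k) = mx :: (map wd m.2 ++ map wd o) by rewrite /pw /= map_cat.
have HL : next (pw m) (last mx (map wd m.2)) = mx.
  have : path (frel (next (pw m))) mx (rcons (map wd m.2) mx) := cycle_next upw.
  by rewrite rcons_path => /andP[_ /eqP].
have Hoc' : path (frel (nxt m)) k (rcons o' k) by move: Hoc; rewrite Eo.
have Hl2 : nxt m (last k o') = k by move: Hoc'; rewrite rcons_path => /andP[_ /eqP].
have Lpw : last mx (map wd m.2) \in pw m by rewrite /pw mem_last.
have Hc : fcycle g (pw (plus m k)).
  rewrite Epw /= rcons_cat cat_path; apply/andP; split.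
    have : path (frel (next (pw m))) mx (rcons (map wd m.2) mx) := cycle_next upw.
    rewrite rcons_path => /andP[Hp Hl].
    rewrite -(path_eq_belast (f := next (pw m))) // => y yb.
    have yp : y \in pw m by apply: mem_belast yb.
    rewrite /g fm_in // /t tpermD //.
    + apply/eqP => Em; have := upw; rewrite /pw lastI rcons_uniq => /andP[/negP []].
      have Hl' : next (pw m) (last mx (map wd m.2)) = mx := eqP Hl.
      have : next (pw m) y = next (pw m) (last mx (map wd m.2)) by rewrite Hl' Em.
      by move/(can_inj (prev_next upw)) => Ey; rewrite -Ey.
    + by apply: contraNneq kpw => ->; rewrite mem_next.
  rewrite Eo /= rcons_path; apply/and3P; split.
  - by rewrite /g fm_in // HL /t tpermL.
  - rewrite (path_map_belast (f := nxt m)).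
    + by move: Hoc'; rewrite rcons_path => /andP[].
    + exact: (@wd_inj n).
    move=> y yb; have yo : y \in o by rewrite Eo; apply: mem_belast yb.
    have yC := oC _ yo.
    rewrite /g fm_out ?pw_wd ?negbK // /t tpermD //; first by rewrite eq_sym wd_mx.
    rewrite (inj_eq (@wd_inj n)); apply/eqP => Ek.
    have : nxt m y = nxt m (last k o') by rewrite Hl2 Ek.
    move/ninj => Ey; have := uo; rewrite Eo lastI rcons_uniq => /andP[/negP []].
    by rewrite -Ey.
  - have Lo : last k o' \in o by rewrite Eo mem_last.
    by rewrite last_map /= /g fm_out ?pw_wd ?negbK ?oC // Hl2 /t tpermR.
move=> x; case: (boolP (x \in pw (plus m k))) => xp.
  by rewrite fm_in // (nextE Hc xp).
have xm : x != mx by apply: contraNneq xp => ->; exact: mem_head.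
have [i Ex] := wd_insub xm; subst x.
have Hi' : i \in Cs (plus m k) by rewrite -(negbK (i \in Cs _)) -pw_wd.
have Hi : i \in Cs m by move: Hi'; rewrite Cs_plus inE => /andP[].
have Hio : i \notin o by move: Hi'; rewrite Cs_plus !inE => /andP[].
rewrite fm_out // (nxt_plus Hg Hk Hi') fm_out ?pw_wd ?negbK // /t tpermD //.
  by rewrite eq_sym wd_mx.
rewrite (inj_eq (@wd_inj n)); apply: contraNneq Hio => Ek.
by apply: (orbit_pred ninj); rewrite -Ek /o fingraph.in_orbit.
Qed.
End QK.
Section QFinal.
Variable n : nat.
Variable F : fieldType.
Local Notation wd := (@widen_ord n n.+1 (leqnSn n)).
Local Notation mx := (@ord_max n).
Implicit Types (s : 'S_n.+1) (m : quasi_mono n).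

Lemma Qc_good m : good m -> quasi_coef (Qn F n) m =
  \sum_(s : 'S_n.+1) (-1) ^+ odd_perm s * ([forall x, s x == fm m x] : bool)%:R.
Proof. by move=> Hg; rewrite Qc_sum; apply: eq_bigr => s _; rewrite matchQ_good. Qed.

Lemma Q_R : Rprop (fun m => quasi_coef (Qn F n) m).
Proof.
move=> m k Hg Hk; have [Hg' _] := plus_good Hg Hk.
rewrite !Qc_good //; set t := tperm mx (wd k).
rewrite (reindex_inj (@mulIg _ t)) /= -sumrN; apply: eq_bigr => s _.
have -> : [forall x, (s * t)%g x == fm (plus m k) x] = [forall x, s x == fm m x].
  by apply: eq_forallb => x; rewrite permM fm_plus // (inj_eq (@perm_inj _ t)).
rewrite odd_permM odd_tperm eq_sym wd_mx signr_addb /=.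
by rewrite mulrN1 mulNr.
Qed.

Lemma Q_0 : quasi_coef (Qn F n) (FW (enum 'I_n)) != 0.
Proof.
have Hg : good (FW (enum 'I_n)).
  apply/and4P; split.
  - apply/andP; split; first exact: enum_uniq.
    by apply/forallP => i; rewrite mem_enum ffunE.
  - by apply/forall_inP => i; rewrite inE ffunE.
  - by apply/forall_inP => i; rewrite inE ffunE.
  - by apply/forall_inP => i; rewrite inE ffunE.
set m := FW _.
have upw : uniq (pw m) by apply: uniq_pw; exact: enum_uniq.
have allp : forall x, x \in pw m.
  move=> x; case: (x =P mx) => [->|/eqP xm]; first exact: mem_head.
  have [i ->] := wd_insub xm; rewrite inE /= (mem_map (@wd_inj n)) mem_enum orbT //.
have fmE : fm m =1 next (pw m) by move=> x; rewrite fm_in.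
have finj : injective (fm m).
  by move=> x y; rewrite !fmE; apply: (can_inj (prev_next upw)).
rewrite Qc_good // (bigD1 (perm finj)) //= big1 ?addr0.
  have -> : [forall x, perm finj x == fm m x] by apply/forallP => x; rewrite permE.
  by rewrite mulr1 signr_eq0.
move=> s Hs; case H: [forall x, s x == fm m x]; last by rewrite mulr0.
exfalso; move/negP: Hs; apply; apply/eqP/permP => x.
by rewrite permE; move/forallP: H => /(_ x) /eqP.
Qed.
End QFinal.
Theorem mainTheorem18 (F : fieldType) (charF0 : [pchar F] =i pred0)
  (n : nat) (P : quasi_poly F n) :
  quasi_multilinear P -> quasi_identity P ->
  exists a : F, forall m : quasi_mono n, quasi_coef P m = a * quasi_coef (Qn F n) m.
Proof.
move=> HP HI.
have Hc0 := @Q_0 n F.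
set c0 := quasi_coef (Qn F n) (FW (enum 'I_n)) in Hc0.
set a := quasi_coef P (FW (enum 'I_n)) / c0.
exists a => m.
pose h := fun m => quasi_coef P m - a * quasi_coef (Qn F n) m.
suff : h m = 0 by move/eqP; rewrite subr_eq0 => /eqP.
apply: (@generic n F h).
- by move=> m' Hb; rewrite /h (P_Z HP HI) // (Q_Z charF0) // mulr0 subr0.
- move=> m' k Hg Hk; rewrite /h (P_R HP HI) // (@Q_R n F) //.
  by rewrite mulrN opprK opprB addrC.
- by rewrite /h /a -/c0 divfK // subrr.
Qed.
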